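(* Let $\mathbb D=\{z\in\mathbb C:|z|<1\}$ and let $\mathcal P$ be the set of holomorphic functions $p$ on $\mathbb D$ with $\operatorname{Re} p(z)>0$ for all $z\in\mathbb D$ (no normalization $p(0)=1$ is imposed). For $p\in\mathcal P$ and $0<r<1$ set \[ I_p(r):=\int_0^{2\pi}\left|\frac{z p'(z)}{p(z)}\right|^2\,d\theta,\qquad z=re^{i\theta}. \] Let $\Phi:(0,1)\to(0,\infty)$ satisfy $\Phi(r)=o\bigl((1-r)^{-2}\bigr)$ as $r\to1^-$. Then there exists $p_\Phi\in\mathcal P$ such that \[ \limsup_{r\to1^-}\frac{I_{p_\Phi}(r)}{\Phi(r)}=+\infty, \] i.e. $I_{p_\Phi}(r)\neq O(\Phi(r))$ as $r\to1^-$. *)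

(* Defs.v *)
From Stdlib Require Import Reals.
From Coquelicot Require Import Coquelicot.
Open Scope R_scope.

Definition in_disc (z : C) : Prop := Cmod z < 1.

(* Complex derivative: is_derive over the absolute ring C, i.e.
   p(w) - p(z) = (w - z) * dp + o(w - z) with complex multiplication. *)
Definition C_is_derive (p : C -> C) (z dp : C) : Prop :=
  @is_derive C_AbsRing C_NormedModule p z dp.

Definition in_class_P_with_deriv (p dp : C -> C) : Prop :=
  (forall z, in_disc z -> C_is_derive p z (dp z)) /\
  (forall z, in_disc z -> 0 < Re (p z)).

Definition polar (r theta : R) : C := (r * cos theta, r * sin theta).

Definition I_p (p dp : C -> C) (r : R) : R :=
  RInt (fun theta => let z := polar r theta in
                     (Cmod (z * dp z / p z)) ^ 2) 0 (2 * PI).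

(* Main.v *)
Require Import Defs.
From Stdlib Require Import Reals Lra Lia ZArith IndefiniteDescription.
From Coquelicot Require Import Coquelicot.
Open Scope R_scope.

Open Scope R_scope.

Definition CSer (u : nat -> C) : C :=
  (Series (fun k => fst (u k)), Series (fun k => snd (u k))).

Lemma sum_n_fst (u : nat -> C) n : fst (sum_n u n) = sum_n (fun k => fst (u k)) n.
Proof.
  induction n.
  - rewrite !sum_O. reflexivity.
  - rewrite !sum_Sn. simpl. rewrite <- IHn. reflexivity.
Qed.

Lemma sum_n_snd (u : nat -> C) n : snd (sum_n u n) = sum_n (fun k => snd (u k)) n.
Proof.
  induction n.
  - rewrite !sum_O. reflexivity.
  - rewrite !sum_Sn. simpl. rewrite <- IHn. reflexivity.
Qed.

Lemma is_series_C_fst (u : nat -> C) l :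
  is_series u l -> is_series (fun k => fst (u k)) (fst l).
Proof.
  intros H. unfold is_series in *.
  apply filterlim_locally. intros eps.
  pose proof (proj1 (filterlim_locally _ _) H eps) as H0. clear H. rename H0 into H.
  destruct H as [N HN]. exists N. intros n Hn.
  specialize (HN n Hn). destruct HN as [H1 H2].
  rewrite <- sum_n_fst. exact H1.
Qed.

Lemma is_series_C_snd (u : nat -> C) l :
  is_series u l -> is_series (fun k => snd (u k)) (snd l).
Proof.
  intros H. unfold is_series in *.
  apply filterlim_locally. intros eps.
  pose proof (proj1 (filterlim_locally _ _) H eps) as H0. clear H. rename H0 into H.
  destruct H as [N HN]. exists N. intros n Hn.
  specialize (HN n Hn). destruct HN as [H1 H2].
  rewrite <- sum_n_snd. exact H2.
Qed.

Lemma CSer_correct (u : nat -> C) (b : nat -> R) :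
  (forall k, Cmod (u k) <= b k) -> ex_series b -> is_series u (CSer u).
Proof.
  intros Hb Hex.
  assert (H : ex_series u) by (apply (ex_series_le u b); assumption).
  destruct H as [l Hl].
  replace (CSer u) with l; [exact Hl|].
  unfold CSer.
  rewrite (is_series_unique _ _ (is_series_C_fst u l Hl)).
  rewrite (is_series_unique _ _ (is_series_C_snd u l Hl)).
  destruct l; reflexivity.
Qed.

Lemma Cmod_sum_n_le (u : nat -> C) (b : nat -> R) :
  (forall k, Cmod (u k) <= b k) -> forall n, Cmod (sum_n u n) <= sum_n b n.
Proof.
  intros Hb n. induction n.
  - rewrite !sum_O. apply Hb.
  - rewrite !sum_Sn. eapply Rle_trans; [apply Cmod_triangle|].
    apply Rplus_le_compat; [exact IHn|apply Hb].
Qed.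

Lemma Cmod_series_le (u : nat -> C) (b : nat -> R) l L :
  is_series u l -> is_series b L -> (forall k, Cmod (u k) <= b k) -> Cmod l <= L.
Proof.
  intros Hu HbL Hb.
  apply (is_lim_seq_le (fun n => Cmod (sum_n u n)) (sum_n b) (Cmod l) L).
  - apply Cmod_sum_n_le; exact Hb.
  - unfold is_lim_seq.
    change (Rbar_locally (Cmod l)) with (locally (@norm C_AbsRing C_NormedModule l)).
    apply (filterlim_comp _ _ _ (sum_n u) (@norm C_AbsRing C_NormedModule)
              _ (locally l) _ Hu).
    apply filterlim_norm.
  - exact HbL.
Qed.

Open Scope R_scope.

Lemma pow_le1 (s : R) n : 0 <= s <= 1 -> s ^ n <= 1.
Proof.
  intros Hs. rewrite <- (pow1 n). apply pow_incr. lra.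
Qed.

Lemma bern_up (s : R) n : 0 <= s <= 1 -> s ^ n * (1 + INR n * (1 - s)) <= 1.
Proof.
  intros Hs. induction n.
  - simpl. lra.
  - rewrite S_INR. simpl.
    assert (0 <= s ^ n) by (apply pow_le; lra).
    assert (s ^ n <= 1) by (apply pow_le1; lra).
    assert (s * (s ^ n * (1 + INR n * (1 - s))) <= s * 1) by (apply Rmult_le_compat_l; lra).
    assert ((1 - s) * (s * s ^ n) <= (1 - s) * 1) by (apply Rmult_le_compat_l; nra).
    nra.
Qed.

Lemma bern_low (s : R) n : 0 <= s <= 1 -> 1 - INR n * (1 - s) <= s ^ n.
Proof.
  intros Hs. induction n.
  - simpl. lra.
  - rewrite S_INR. simpl.
    assert (0 <= s ^ n) by (apply pow_le; lra).
    assert (0 <= INR n) by apply pos_INR.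
    assert (s * (1 - INR n * (1 - s)) <= s * s ^ n) by (apply Rmult_le_compat_l; lra).
    assert (0 <= INR n * ((1 - s) * (1 - s))) by (apply Rmult_le_pos; nra).
    nra.
Qed.

Lemma n_pow_bound (s : R) n : 0 <= s < 1 -> INR n * s ^ n <= / (1 - s).
Proof.
  intros Hs. pose proof (bern_up s n ltac:(lra)).
  assert (0 <= s ^ n) by (apply pow_le; lra).
  assert (0 <= INR n) by apply pos_INR.
  apply (Rmult_le_reg_r (1 - s)); [lra|].
  rewrite Rinv_l by lra. nra.
Qed.

Lemma n2_pow_bound (s : R) n : 0 <= s < 1 -> INR n ^ 2 * (s ^ 2) ^ n <= / (1 - s) ^ 2.
Proof.
  intros Hs. pose proof (n_pow_bound s n Hs).
  assert (0 <= s ^ n) by (apply pow_le; lra).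
  assert (0 <= INR n) by apply pos_INR.
  rewrite <- pow_mult, Nat.mul_comm, pow_mult.
  rewrite <- Rpow_mult_distr. rewrite <- pow_inv. apply pow_incr. split; [|exact H].
  apply Rmult_le_pos; assumption.
Qed.

Open Scope C_scope.

Lemma Cpow_diff (w z : C) (rho : R) m :
  (Cmod w <= rho)%R -> (Cmod z <= rho)%R ->
  (rho * Cmod (w ^ m - z ^ m) <= INR m * rho ^ m * Cmod (w - z))%R.
Proof.
  intros Hw Hz. assert (Hr : (0 <= rho)%R) by (pose proof (Cmod_ge_0 z); lra).
  induction m.
  - simpl. replace (1 - 1) with (RtoC 0) by ring. rewrite Cmod_0. lra.
  - replace (w ^ S m - z ^ S m) with (w * (w ^ m - z ^ m) + (w - z) * z ^ m)
      by (rewrite !Cpow_S; ring).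
    rewrite S_INR. simpl.
    pose proof (Cmod_triangle (w * (w ^ m - z ^ m)) ((w - z) * z ^ m)).
    rewrite !Cmod_mult, Cmod_pow in H.
    assert (0 <= Cmod (w ^ m - z ^ m))%R by apply Cmod_ge_0.
    assert (0 <= Cmod (w - z))%R by apply Cmod_ge_0.
    assert (Cmod z ^ m <= rho ^ m)%R by (apply pow_incr; split; [apply Cmod_ge_0|exact Hz]).
    assert (0 <= rho ^ m)%R by (apply pow_le; lra).
    assert (0 <= Cmod w)%R by apply Cmod_ge_0.
    assert (rho * (Cmod w * Cmod (w ^ m - z ^ m)) <= rho * (INR m * rho ^ m * Cmod (w - z)))%R.
    { rewrite <- Rmult_assoc, (Rmult_comm rho), Rmult_assoc. 
      apply Rle_trans with (rho * (rho * Cmod (w ^ m - z ^ m)))%R.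
      + apply Rmult_le_compat_r; [nra|exact Hw].
      + apply Rmult_le_compat_l; [lra|exact IHm]. }
    assert (rho * Cmod (w * (w ^ m - z ^ m) + (w - z) * z ^ m) <= rho * (Cmod w * Cmod (w ^ m - z ^ m) + Cmod (w - z) * Cmod z ^ m))%R by (apply Rmult_le_compat_l; lra).
    assert (rho * (Cmod (w - z) * Cmod z ^ m) <= rho * (Cmod (w - z) * rho ^ m))%R.
    { apply Rmult_le_compat_l; [lra|]. apply Rmult_le_compat_l; lra. }
    nra.
Qed.

Definition D2 (w z : C) (m : nat) : C := w ^ m - z ^ m - INR m * z ^ (pred m) * (w - z).

Lemma D2_S (w z : C) m : D2 w z (S m) = w * D2 w z m + INR m * z ^ (pred m) * ((w - z) * (w - z)).
Proof.
  unfold D2. destruct m.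
  - simpl. ring.
  - simpl pred. rewrite !S_INR, !RtoC_plus. rewrite !Cpow_S. ring.
Qed.

Lemma D2_bound (w z : C) (rho : R) m :
  (Cmod w <= rho)%R -> (Cmod z <= rho)%R ->
  (rho ^ 2 * Cmod (D2 w z m) <= INR m ^ 2 * rho ^ m * Cmod (w - z) ^ 2)%R.
Proof.
  intros Hw Hz. assert (Hr : (0 <= rho)%R) by (pose proof (Cmod_ge_0 z); lra).
  assert (0 <= Cmod (w - z))%R by apply Cmod_ge_0.
  induction m.
  - unfold D2. simpl. replace (1 - 1 - 0 * 1 * (w - z)) with (RtoC 0) by ring.
    rewrite Cmod_0. lra.
  - rewrite D2_S.
    pose proof (Cmod_triangle (w * D2 w z m) (INR m * z ^ pred m * ((w - z) * (w - z)))).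
    rewrite !Cmod_mult, Cmod_pow, Cmod_R, Rabs_pos_eq in H0 by apply pos_INR.
    assert (0 <= Cmod (D2 w z m))%R by apply Cmod_ge_0.
    assert (0 <= Cmod w)%R by apply Cmod_ge_0.
    assert (0 <= INR m)%R by apply pos_INR.
    assert (Cmod z ^ pred m <= rho ^ pred m)%R by (apply pow_incr; split; [apply Cmod_ge_0|exact Hz]).
    assert (0 <= rho ^ pred m)%R by (apply pow_le; lra).
    assert (0 <= rho ^ m)%R by (apply pow_le; lra).
    assert (E : (INR m * (rho ^ 2 * rho ^ pred m) <= INR m * rho ^ S m)%R).
    { destruct m; simpl; [lra|]. right; ring. }
    rewrite S_INR. simpl. simpl in IHm, E.
    assert (rho * rho * (Cmod w * Cmod (D2 w z m)) <= rho * (INR m * (INR m * 1) * rho ^ m * (Cmod (w - z) * (Cmod (w - z) * 1))))%R.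
    { apply Rle_trans with (rho * (rho * rho * Cmod (D2 w z m)))%R.
      + assert (rho * rho * Cmod (D2 w z m) >= 0)%R by nra. nra.
      + apply Rmult_le_compat_l; lra. }
    assert (rho * rho * (INR m * Cmod z ^ pred m * (Cmod (w - z) * Cmod (w - z))) <=
            INR m * rho ^ S m * (Cmod (w - z) * Cmod (w - z)))%R.
    { simpl. 
      apply Rle_trans with (INR m * (rho * (rho * 1) * rho ^ pred m) * (Cmod (w - z) * Cmod (w - z)))%R.
      + assert (0 <= Cmod (w - z) * Cmod (w - z))%R by nra.
        assert (Ha : (rho * rho * Cmod z ^ pred m <= rho * rho * rho ^ pred m)%R) by (apply Rmult_le_compat_l; nra).
        assert (Hb : (0 <= INR m * (Cmod (w - z) * Cmod (w - z)))%R) by nra.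
        pose proof (Rmult_le_compat_r _ _ _ Hb Ha). nra.
      + simpl. apply Rmult_le_compat_r; [nra|]. simpl in E. lra. }
    simpl in H5.
    assert (Hc : (rho * rho * Cmod (w * D2 w z m + INR m * z ^ Init.Nat.pred m * ((w - z) * (w - z))) <= rho * rho * (Cmod w * Cmod (D2 w z m) + INR m * Cmod z ^ Init.Nat.pred m * (Cmod (w - z) * Cmod (w - z))))%R) by (apply Rmult_le_compat_l; nra).
    assert (Hd : (0 <= (INR m + 1) * (rho * rho ^ m) * (Cmod (w - z) * Cmod (w - z)))%R).
    { apply Rmult_le_pos; [apply Rmult_le_pos|]; nra. }
    simpl in H8. lra.
Qed.

Open Scope R_scope.

Section Gen.
Variable al : nat -> R.
Variable e : nat -> nat.
Hypothesis al_pos : forall k, 0 <= al k.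
Hypothesis al_ex : ex_series al.

Definition uS (z : C) (k : nat) : C := (RtoC (al k) * z ^ e k)%C.
Definition vS (z : C) (k : nat) : C := (RtoC (al k * INR (e k)) * z ^ pred (e k))%C.
Definition Sf (z : C) : C := CSer (uS z).
Definition Tf (z : C) : C := CSer (vS z).

Lemma uS_bound z k : Cmod z <= 1 -> Cmod (uS z k) <= al k.
Proof.
  intros Hz. unfold uS. rewrite Cmod_mult, Cmod_R, Rabs_pos_eq, Cmod_pow by apply al_pos.
  pose proof (pow_le1 (Cmod z) (e k) (conj (Cmod_ge_0 z) Hz)).
  pose proof (al_pos k). nra.
Qed.

Lemma Sf_series z : Cmod z <= 1 -> is_series (uS z) (Sf z).
Proof.
  intros Hz. apply (CSer_correct _ al); [|exact al_ex].
  intros k; apply uS_bound; exact Hz.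
Qed.

Lemma Sf_bound z : Cmod z <= 1 -> Cmod (Sf z) <= Series al.
Proof.
  intros Hz. apply (Cmod_series_le (uS z) al _ _ (Sf_series z Hz) (Series_correct _ al_ex)).
  intros k; apply uS_bound; exact Hz.
Qed.

Lemma pred_pow_le (rho : R) m : 0 <= rho -> INR m * (rho * rho ^ pred m) <= INR m * rho ^ m.
Proof.
  intros. destruct m; simpl; lra.
Qed.

Lemma vS_bound z k rho : 0 < rho < 1 -> Cmod z <= rho ->
  Cmod (vS z k) <= al k * / (rho * (1 - rho)).
Proof.
  intros Hr Hz. unfold vS.
  rewrite Cmod_mult, Cmod_R, Rabs_pos_eq, Cmod_pow.
  2:{ apply Rmult_le_pos; [apply al_pos|apply pos_INR]. }
  pose proof (al_pos k). pose proof (pos_INR (e k)).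
  assert (A1 : Cmod z ^ pred (e k) <= rho ^ pred (e k))
    by (apply pow_incr; split; [apply Cmod_ge_0|exact Hz]).
  pose proof (pred_pow_le rho (e k) ltac:(lra)).
  pose proof (n_pow_bound rho (e k) ltac:(lra)).
  assert (A2 : INR (e k) * rho ^ pred (e k) <= / (rho * (1 - rho))).
  { rewrite Rinv_mult. apply (Rmult_le_reg_l rho); [lra|].
    replace (rho * (/ rho * / (1 - rho))) with (/ (1 - rho)) by (field; lra).
    lra. }
  assert (0 <= Cmod z ^ pred (e k)) by (apply pow_le; apply Cmod_ge_0).
  assert (INR (e k) * Cmod z ^ pred (e k) <= INR (e k) * rho ^ pred (e k))
    by (apply Rmult_le_compat_l; lra).
  rewrite Rmult_assoc. apply Rmult_le_compat_l; lra.
Qed.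

Lemma Tf_series z : Cmod z < 1 -> is_series (vS z) (Tf z).
Proof.
  intros Hz. pose proof (Cmod_ge_0 z).
  set (rho := (1 + Cmod z) / 2).
  apply (CSer_correct _ (fun k => al k * / (rho * (1 - rho)))).
  - intros k. apply vS_bound; unfold rho; lra.
  - apply ex_series_scal_r. exact al_ex.
Qed.

Lemma term_D2 w z k :
  (uS w k - uS z k - (w - z) * vS z k)%C = (RtoC (al k) * D2 w z (e k))%C.
Proof.
  unfold uS, vS, D2. rewrite RtoC_mult. ring.
Qed.

Lemma ball_norm_C (x y : C) eps : ball_norm x eps y -> Cmod (y - x) < eps.
Proof. unfold ball_norm. intros H. exact H. Qed.

Lemma Sf_deriv z : Cmod z < 1 -> C_is_derive Sf z (Tf z).
Proof.
  intros Hz. pose proof (Cmod_ge_0 z) as Hz0.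
  set (sg := (1 + Cmod z) / 2).
  set (rho := sg ^ 2).
  assert (Hsg : 0 < sg < 1) by (unfold sg; lra).
  assert (Hrho : Cmod z < rho) by (unfold rho, sg; nra).
  assert (Hrho1 : rho <= 1) by (unfold rho; nra).
  assert (Hrho0 : 0 < rho) by lra.
  set (K := / (1 - sg) ^ 2 * / rho ^ 2).
  assert (HK : 0 < K).
  { unfold K. apply Rmult_lt_0_compat; apply Rinv_0_lt_compat; apply pow_lt; lra. }
  set (A := Rabs (Series al)).
  assert (HA : 0 <= A) by apply Rabs_pos.
  unfold C_is_derive, is_derive, filterdiff. split; [apply is_linear_scal_l|].
  intros x Hx. assert (Hxz : z = x) by (apply (is_filter_lim_locally_unique (K := C_AbsRing) (V := AbsRing_NormedModule C_AbsRing)); exact Hx). subst x.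
  intros eps. apply (locally_le_locally_norm (K := C_AbsRing) (V := AbsRing_NormedModule C_AbsRing) z).
  assert (Hd : 0 < Rmin (rho - Cmod z) (eps / (A * K + 1))).
  { apply Rmin_pos; [lra|]. apply Rdiv_lt_0_compat; [apply cond_pos|nra]. }
  exists (mkposreal _ Hd). intros w Hw. apply ball_norm_C in Hw. simpl in Hw.
  set (d := Cmod (w - z)) in *.
  assert (Hd0 : 0 <= d) by apply Cmod_ge_0.
  assert (Hd1 : d < rho - Cmod z) by (eapply Rlt_le_trans; [exact Hw|apply Rmin_l]).
  assert (Hd2 : d <= eps / (A * K + 1)) by (left; eapply Rlt_le_trans; [exact Hw|apply Rmin_r]).
  assert (Hw1 : Cmod w <= rho).
  { replace w with ((w - z) + z)%C by ring. pose proof (Cmod_triangle (w - z) z). fold d in H. lra. }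
  assert (Hw2 : Cmod w <= 1) by lra.
  assert (Hz2 : Cmod z <= 1) by lra.
  assert (HS : is_series (fun k => (RtoC (al k) * D2 w z (e k))%C)
                 (Sf w - Sf z - (w - z) * Tf z)%C).
  { eapply is_series_ext; [intros k; apply term_D2|].
    apply (is_series_minus (V := C_NormedModule)).
    - apply (is_series_minus (V := C_NormedModule)); apply Sf_series; assumption.
    - apply (is_series_scal (V := C_NormedModule)). apply Tf_series; assumption. }
  assert (Hb : forall k, Cmod (RtoC (al k) * D2 w z (e k)) <= al k * (K * d ^ 2)).
  { intros k. rewrite Cmod_mult, Cmod_R, Rabs_pos_eq by apply al_pos.
    apply Rmult_le_compat_l; [apply al_pos|].
    pose proof (D2_bound w z rho (e k) Hw1 ltac:(lra)).
    pose proof (n2_pow_bound sg (e k) ltac:(lra)). fold rho in H0.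
    assert (0 < rho ^ 2) by (apply pow_lt; lra).
    apply (Rmult_le_reg_l (rho ^ 2)); [assumption|].
    apply Rle_trans with (INR (e k) ^ 2 * rho ^ e k * d ^ 2); [exact H|].
    unfold K. replace (rho ^ 2 * (/ (1 - sg) ^ 2 * / rho ^ 2 * d ^ 2)) with (/ (1 - sg) ^ 2 * d ^ 2)
      by (field; split; lra).
    apply Rmult_le_compat_r; [nra|exact H0]. }
  pose proof (Cmod_series_le _ _ _ _ HS (is_series_scal_r (K * d ^ 2) _ _ (Series_correct _ al_ex)) Hb).
  change (norm (minus (minus (Sf w) (Sf z)) (scal (minus w z) (Tf z)))) with
    (Cmod (Sf w - Sf z - (w - z) * Tf z)%C).
  change (norm (minus w z)) with d.
  eapply Rle_trans; [exact H|].
  assert (Series al <= A) by apply Rle_abs.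
  assert (0 <= K * d ^ 2) by nra.
  assert (Series al * (K * d ^ 2) <= A * (K * d ^ 2)) by (apply Rmult_le_compat_r; lra).
  assert (d * (A * K + 1) <= eps).
  { apply (Rmult_le_compat_r (A * K + 1)) in Hd2; [|nra].
    unfold Rdiv in Hd2. rewrite Rmult_assoc, Rinv_l in Hd2 by nra. lra. }
  assert (d * (d * (A * K + 1)) <= d * eps) by (apply Rmult_le_compat_l; lra).
  nra.
Qed.

Lemma pred_pow_le2 (rho : R) m : 0 <= rho ->
  INR m * (INR (pred m) * (rho * rho ^ pred m)) <= INR m ^ 2 * rho ^ m.
Proof.
  intros. destruct m; [simpl; lra|].
  change (pred (S m)) with m. replace (rho ^ S m) with (rho * rho ^ m) by (simpl; ring). rewrite S_INR.
  pose proof (pos_INR m). assert (0 <= rho ^ m) by (apply pow_le; lra).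
  assert (0 <= rho * rho ^ m) by (apply Rmult_le_pos; lra).
  assert (0 <= (INR m + 1) * (rho * rho ^ m)) by (apply Rmult_le_pos; lra).
  assert (E: (INR m+1)^2 * (rho * rho^m) - (INR m + 1) * (INR m * (rho * rho ^ m)) = (INR m + 1) * (rho * rho ^ m)) by ring.
  lra.
Qed.

Lemma Tf_cont z : Cmod z < 1 -> filterlim Tf (locally z) (locally (Tf z)).
Proof.
  intros Hz. pose proof (Cmod_ge_0 z) as Hz0.
  set (sg := (1 + Cmod z) / 2).
  set (rho := sg ^ 2).
  assert (Hsg : 0 < sg < 1) by (unfold sg; lra).
  assert (Hrho : Cmod z < rho) by (unfold rho, sg; nra).
  assert (Hrho1 : rho <= 1) by (unfold rho; nra).
  assert (Hrho0 : 0 < rho) by lra.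
  set (K := / (1 - sg) ^ 2 * / rho ^ 2).
  assert (HK : 0 < K).
  { unfold K. apply Rmult_lt_0_compat; apply Rinv_0_lt_compat; apply pow_lt; lra. }
  set (A := Rabs (Series al)).
  assert (HA : 0 <= A) by apply Rabs_pos.
  apply (filterlim_locally_ball_norm (K := C_AbsRing) (U := C_NormedModule)).
  intros eps. apply (locally_le_locally_norm (K := C_AbsRing) (V := C_NormedModule) z).
  assert (Hd : 0 < Rmin (rho - Cmod z) (eps / (A * K + 1))).
  { apply Rmin_pos; [lra|]. apply Rdiv_lt_0_compat; [apply cond_pos|nra]. }
  exists (mkposreal _ Hd). intros w Hw. apply ball_norm_C in Hw. simpl in Hw.
  set (d := Cmod (w - z)) in *.
  assert (Hd0 : 0 <= d) by apply Cmod_ge_0.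
  assert (Hd1 : d < rho - Cmod z) by (eapply Rlt_le_trans; [exact Hw|apply Rmin_l]).
  assert (Hd2 : d < eps / (A * K + 1)) by (eapply Rlt_le_trans; [exact Hw|apply Rmin_r]).
  assert (Hw1 : Cmod w <= rho).
  { replace w with ((w - z) + z)%C by ring. pose proof (Cmod_triangle (w - z) z). fold d in H. lra. }
  assert (Hrho2 : rho < 1) by (unfold rho; nra).
  assert (Hw2 : Cmod w < 1) by lra.
  assert (HS : is_series (fun k => (RtoC (al k * INR (e k)) * (w ^ pred (e k) - z ^ pred (e k)))%C)
                 (Tf w - Tf z)%C).
  { pose proof (is_series_minus (V:=C_NormedModule) _ _ _ _ (Tf_series w Hw2) (Tf_series z Hz)) as H0.
    eapply is_series_ext; [|exact H0]. intros k. unfold vS.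
    change (((RtoC (al k * INR (e k)) * w ^ pred (e k)) - (RtoC (al k * INR (e k)) * z ^ pred (e k)))%C = (RtoC (al k * INR (e k)) * (w ^ pred (e k) - z ^ pred (e k)))%C); ring. }
  assert (Hb : forall k, Cmod (RtoC (al k * INR (e k)) * (w ^ pred (e k) - z ^ pred (e k))) <= al k * (K * d)).
  { intros k. rewrite Cmod_mult, Cmod_R, Rabs_pos_eq.
    2:{ apply Rmult_le_pos; [apply al_pos|apply pos_INR]. }
    rewrite Rmult_assoc. apply Rmult_le_compat_l; [apply al_pos|].
    pose proof (Cpow_diff w z rho (pred (e k)) Hw1 ltac:(lra)). fold d in H.
    pose proof (n2_pow_bound sg (e k) ltac:(lra)). fold rho in H0.
    pose proof (pred_pow_le2 rho (e k) ltac:(lra)).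
    pose proof (pos_INR (e k)). pose proof (pos_INR (pred (e k))).
    assert (0 < rho ^ 2) by (apply pow_lt; lra).
    apply (Rmult_le_reg_l (rho ^ 2)); [assumption|].
    unfold K. replace (rho ^ 2 * (/ (1 - sg) ^ 2 * / rho ^ 2 * d)) with (/ (1 - sg) ^ 2 * d)
      by (field; split; lra).
    assert (0 <= rho ^ pred (e k)) by (apply pow_le; lra).
    assert (E1 : rho ^ 2 * (INR (e k) * Cmod (w ^ pred (e k) - z ^ pred (e k)))
            <= rho * INR (e k) * (INR (pred (e k)) * rho ^ pred (e k) * d)).
    { replace (rho ^ 2 * (INR (e k) * Cmod (w ^ pred (e k) - z ^ pred (e k))))
        with (rho * INR (e k) * (rho * Cmod (w ^ pred (e k) - z ^ pred (e k)))) by ring.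
      apply Rmult_le_compat_l; [nra|exact H]. }
    assert (E2 : rho * INR (e k) * (INR (pred (e k)) * rho ^ pred (e k) * d)
            = INR (e k) * (INR (pred (e k)) * (rho * rho ^ pred (e k))) * d) by ring.
    assert (E3 : INR (e k) * (INR (pred (e k)) * (rho * rho ^ pred (e k))) * d <= INR (e k) ^ 2 * rho ^ e k * d)
      by (apply Rmult_le_compat_r; lra).
    assert (E4 : INR (e k) ^ 2 * rho ^ e k * d <= / (1 - sg) ^ 2 * d)
      by (apply Rmult_le_compat_r; lra).
    lra. }
  pose proof (Cmod_series_le _ _ _ _ HS (is_series_scal_r (K * d) _ _ (Series_correct _ al_ex)) Hb).
  unfold ball_norm. change (norm (minus (Tf w) (Tf z))) with (Cmod (Tf w - Tf z)%C).
  eapply Rle_lt_trans; [exact H|].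
  assert (Series al <= A) by apply Rle_abs.
  assert (0 <= K * d) by nra.
  assert (Series al * (K * d) <= A * (K * d)) by (apply Rmult_le_compat_r; lra).
  assert (d * (A * K + 1) < eps).
  { apply (Rmult_lt_compat_r (A * K + 1)) in Hd2; [|nra].
    unfold Rdiv in Hd2. rewrite Rmult_assoc, Rinv_l in Hd2 by nra. lra. }
  nra.
Qed.
End Gen.

Open Scope R_scope.

Lemma polar_cont r t : continuous (polar r) t.
Proof.
  unfold continuous, polar.
  intros P [eps HP].
  assert (H1 : continuous (fun x => r * cos x) t).
  { apply (continuous_mult (K := R_AbsRing) (fun _ => r) cos); [apply continuous_const|apply continuous_cos]. }
  assert (H2 : continuous (fun x => r * sin x) t).
  { apply (continuous_mult (K := R_AbsRing) (fun _ => r) sin); [apply continuous_const|apply continuous_sin]. }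
  pose proof (proj1 (filterlim_locally _ _) H1 eps) as L1.
  pose proof (proj1 (filterlim_locally _ _) H2 eps) as L2.
  unfold filtermap. generalize (filter_and _ _ L1 L2). apply filter_imp.
  intros x [B1 B2]. apply HP. split; assumption.
Qed.

Lemma cont_abs_to_C (f : C -> C) z :
  filterlim f (@locally (AbsRing_UniformSpace C_AbsRing) z) (@locally (AbsRing_UniformSpace C_AbsRing) (f z)) ->
  filterlim f (@locally C_UniformSpace z) (@locally C_UniformSpace (f z)).
Proof.
  intros H P HP. apply locally_C. apply H. apply locally_C. exact HP.
Qed.

Lemma deriv_cont (f : C -> C) z l : C_is_derive f z l ->
  filterlim f (@locally C_UniformSpace z) (@locally C_UniformSpace (f z)).
Proof.
  intros H.
  pose proof (ex_derive_continuous (K := C_AbsRing) (V := C_NormedModule) f z (ex_intro _ l H)) as H1.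
  intros P HP. apply locally_C. apply H1. exact HP.
Qed.

Lemma Cmod_cont (z : C) : filterlim Cmod (@locally C_UniformSpace z) (locally (Cmod z)).
Proof.
  apply (filterlim_norm (K := C_AbsRing) (V := C_NormedModule)).
Qed.

Open Scope R_scope.

Definition al (k : nat) : R := / 4 * (/ 16) ^ k.

Lemma al_pos k : 0 <= al k.
Proof. unfold al. apply Rmult_le_pos; [lra|]. apply pow_le. lra. Qed.

Lemma al_le k : al k <= / 4.
Proof.
  unfold al. pose proof (pow_le1 (/16) k ltac:(lra)).
  pose proof (pow_le (/16) k ltac:(lra)). nra.
Qed.

Lemma al_series : is_series al (4 / 15).
Proof.
  replace (4 / 15) with (/ 4 * / (1 - / 16)) by field.
  apply (is_series_scal (V := R_NormedModule) (/ 4)).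
  apply is_series_geom. rewrite Rabs_pos_eq; lra.
Qed.

Lemma al_ex : ex_series al.
Proof. exists (4 / 15). exact al_series. Qed.

Lemma al_Series : Series al = 4 / 15.
Proof. apply is_series_unique. exact al_series. Qed.

Definition pp (e : nat -> nat) (z : C) : C := (1 + Sf al e z)%C.

Lemma pp_deriv e z : Cmod z < 1 -> C_is_derive (pp e) z (Tf al e z).
Proof.
  intros Hz. unfold C_is_derive.
  rewrite <- (plus_zero_l (Tf al e z)).
  apply (is_derive_plus (K := C_AbsRing) (V := C_NormedModule) (fun _ => RtoC 1) (Sf al e)).
  - apply (is_derive_const (K := C_AbsRing) (V := C_NormedModule)).
  - apply Sf_deriv; [exact al_pos|exact al_ex|exact Hz].
Qed.

Lemma pp_bound e z : Cmod z <= 1 -> Cmod (pp e z) <= 19 / 15.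
Proof.
  intros Hz. unfold pp. pose proof (Sf_bound al e al_pos al_ex z Hz). rewrite al_Series in H.
  eapply Rle_trans; [apply Cmod_triangle|]. rewrite Cmod_1. lra.
Qed.

Lemma pp_re e z : Cmod z <= 1 -> 11 / 15 <= Re (pp e z).
Proof.
  intros Hz. unfold pp. pose proof (Sf_bound al e al_pos al_ex z Hz). rewrite al_Series in H.
  pose proof (re_le_Cmod (Sf al e z)).
  unfold Re in *. change (fst (1 + Sf al e z)%C) with (1 + fst (Sf al e z)). apply Rabs_le_between in H0. lra.
Qed.

Lemma pp_nz e z : Cmod z <= 1 -> pp e z <> 0%C.
Proof.
  intros Hz H. pose proof (pp_re e z Hz). rewrite H in H0. simpl in H0. lra.
Qed.

Lemma class_P e : in_class_P_with_deriv (pp e) (Tf al e).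
Proof.
  split.
  - intros z Hz. apply pp_deriv. exact Hz.
  - intros z Hz. pose proof (pp_re e z ltac:(unfold in_disc in Hz; lra)). lra.
Qed.

Lemma Cmod_polar r t : 0 <= r -> Cmod (polar r t) = r.
Proof.
  intros Hr. unfold Cmod, polar. simpl.
  replace (r * cos t * (r * cos t * 1) + r * sin t * (r * sin t * 1)) with (r * r * (Rsqr (sin t) + Rsqr (cos t))) by (unfold Rsqr; ring).
  rewrite sin2_cos2. rewrite Rmult_1_r. apply sqrt_square. exact Hr.
Qed.

Open Scope R_scope.

Lemma Cmod_sum_n_le' (u : nat -> C) (b : nat -> R) n :
  (forall k, (k <= n)%nat -> Cmod (u k) <= b k) -> Cmod (sum_n u n) <= sum_n b n.
Proof.
  induction n; intros Hb.
  - rewrite !sum_O. apply Hb. lia.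
  - rewrite !sum_Sn. eapply Rle_trans; [apply Cmod_triangle|].
    apply Rplus_le_compat; [apply IHn; intros; apply Hb; lia|apply Hb; lia].
Qed.

Lemma vS_simple e z j : Cmod z <= 1 -> Cmod (vS al e z j) <= INR (e j).
Proof.
  intros Hz. unfold vS.
  rewrite Cmod_mult, Cmod_R, Rabs_pos_eq, Cmod_pow.
  2:{ apply Rmult_le_pos; [apply al_pos|apply pos_INR]. }
  pose proof (pow_le1 (Cmod z) (pred (e j)) (conj (Cmod_ge_0 z) Hz)).
  pose proof (pow_le (Cmod z) (pred (e j)) (Cmod_ge_0 z)).
  pose proof (al_le j). pose proof (al_pos j). pose proof (pos_INR (e j)).
  assert (al j * INR (e j) <= INR (e j)) by nra.
  assert (0 <= al j * INR (e j)) by nra.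
  nra.
Qed.

Lemma T_lower (e : nat -> nat) m (z : C) :
  1 <= INR (e (S m)) ->
  Cmod z = 1 - / (4 * INR (e (S m))) ->
  (forall j, (j <= m)%nat -> (e j <= e m)%nat) ->
  6 * INR (S m) * INR (e m) <= al (S m) * INR (e (S m)) ->
  al (S m) * INR (e (S m)) / 5 <= Cmod (Tf al e z).
Proof.
  intros HN Hr Hmono Hhead.
  set (N := INR (e (S m))) in *.
  set (r := Cmod z) in *.
  assert (Hq : 0 < / (4 * N) <= / 4).
  { split; [apply Rinv_0_lt_compat; lra|]. apply Rinv_le_contravar; lra. }
  assert (Hr1 : 3 / 4 <= r < 1) by lra.
  assert (Hz1 : Cmod z < 1) by (fold r; lra).
  set (L := Tf al e z).
  set (H := sum_n (vS al e z) m).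
  set (v := vS al e z (S m)).
  pose proof (Tf_series al e al_pos al_ex z Hz1) as HT. fold L in HT.
  assert (Htail : is_series (fun i => vS al e z (S (S m) + i)) (L - (H + v))%C).
  { apply (is_series_incr_n (K := C_AbsRing) (V := C_NormedModule) _ (S (S m))); [lia|].
    simpl pred. rewrite sum_Sn.
    match goal with |- is_series _ ?l => replace l with L; [exact HT|] end.
    unfold H, v. change (L = Cplus (L - (sum_n (vS al e z) m + vS al e z (S m))) (Cplus (sum_n (vS al e z) m) (vS al e z (S m)))). ring. }
  set (K := / (r * (1 - r))).
  assert (Hb : forall i, Cmod (vS al e z (S (S m) + i)) <= al (S m) * / 16 * (/ 16) ^ i * K).
  { intros i. replace (al (S m) * / 16 * (/ 16) ^ i) with (al (S (S m) + i)).
    - apply vS_bound; [exact al_pos|lra|fold r; lra].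
    - unfold al. rewrite pow_add. simpl. ring. }
  assert (Hs : is_series (fun i => al (S m) * / 16 * (/ 16) ^ i * K) (al (S m) * / 16 * / (1 - / 16) * K)).
  { apply is_series_scal_r.
    apply (is_series_scal (V := R_NormedModule) (al (S m) * / 16)).
    apply is_series_geom. rewrite Rabs_pos_eq; lra. }
  pose proof (Cmod_series_le _ _ _ _ Htail Hs Hb) as Ht.
  assert (Hh : Cmod H <= INR (S m) * INR (e m)).
  { rewrite <- sum_n_const. apply Cmod_sum_n_le'. intros j Hj.
    eapply Rle_trans; [apply vS_simple; fold r; lra|]. apply le_INR. apply Hmono. exact Hj. }
  assert (Hv : Cmod v = al (S m) * N * r ^ pred (e (S m))).
  { unfold v, vS. rewrite Cmod_mult, Cmod_R, Rabs_pos_eq, Cmod_pow; [reflexivity|].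
    apply Rmult_le_pos; [apply al_pos|apply pos_INR]. }
  assert (HrN : N * (1 - r) = / 4) by (rewrite Hr; field; lra).
  assert (Hn1 : (0 < e (S m))%nat) by (apply INR_lt; simpl; fold N; lra).
  assert (Epow : r ^ e (S m) = r * r ^ pred (e (S m))).
  { destruct (e (S m)); [lia|reflexivity]. }
  assert (Hpow : 3 / 4 <= r ^ pred (e (S m))).
  { pose proof (bern_low r (e (S m)) ltac:(lra)) as B. fold N in B. rewrite HrN, Epow in B.
    pose proof (pow_le r (pred (e (S m))) ltac:(lra)).
    assert (r * r ^ pred (e (S m)) <= r ^ pred (e (S m))) by nra. lra. }
  assert (HK : K <= 16 * N / 3).
  { unfold K. replace (16 * N / 3) with (/ (3 / (16 * N))) by (field; lra).
    apply Rinv_le_contravar; [apply Rdiv_lt_0_compat; lra|].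
    assert (1 - r = / (4 * N)) by lra. rewrite H0.
    apply (Rmult_le_reg_r (16 * N)); [lra|].
    replace (3 / (16 * N) * (16 * N)) with 3 by (field; lra).
    replace (r * / (4 * N) * (16 * N)) with (4 * r) by (field; lra). lra. }
  assert (Htri : Cmod v <= Cmod L + Cmod H + Cmod (L - (H + v))%C).
  { replace v with (L + (- H) + (- (L - (H + v))))%C at 1 by ring.
    eapply Rle_trans; [apply Cmod_triangle|].
    rewrite Cmod_opp. apply Rplus_le_compat_r.
    eapply Rle_trans; [apply Cmod_triangle|]. rewrite Cmod_opp. lra. }
  pose proof (al_pos (S m)) as Hal.
  assert (Hv2 : 3 / 4 * (al (S m) * N) <= Cmod v).
  { rewrite Hv. assert (0 <= al (S m) * N) by nra. nra. }
  assert (Ht2 : al (S m) * / 16 * / (1 - / 16) * K <= 16 / 45 * (al (S m) * N)).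
  { replace (al (S m) * / 16 * / (1 - / 16) * K) with (al (S m) / 15 * K) by field.
    apply Rle_trans with (al (S m) / 15 * (16 * N / 3)); [apply Rmult_le_compat_l; lra|].
    right. field. }
  assert (0 <= al (S m) * N) by nra. lra.
Qed.

Open Scope R_scope.

Lemma cont_CT (f : C -> C) (z : C) :
  filterlim f (@locally C_UniformSpace z) (@locally C_UniformSpace (f z)) ->
  forall r t, polar r t = z -> continuous (fun t => Cmod (f (polar r t))) t.
Proof.
  intros Hf r t Ht.
  apply (continuous_comp (U := R_UniformSpace) (V := C_UniformSpace) (W := R_UniformSpace) (polar r) (fun z => Cmod (f z))).
  - apply polar_cont.
  - rewrite Ht. apply (continuous_comp (U := C_UniformSpace) (V := C_UniformSpace) (W := R_UniformSpace) f Cmod).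
    + exact Hf.
    + apply Cmod_cont.
Qed.

Lemma integrand_eq e r t : 0 <= r < 1 ->
  (let z := polar r t in Cmod (z * Tf al e z / pp e z) ^ 2) =
  (r * Cmod (Tf al e (polar r t)) * / Cmod (pp e (polar r t))) *
  (r * Cmod (Tf al e (polar r t)) * / Cmod (pp e (polar r t))).
Proof.
  intros Hr. simpl. rewrite Cmod_div, Cmod_mult, Cmod_polar by (try apply pp_nz; try rewrite Cmod_polar; lra).
  unfold Rdiv. ring.
Qed.

Lemma integrand_cont e r t : 0 <= r < 1 ->
  continuous (fun t => let z := polar r t in Cmod (z * Tf al e z / pp e z) ^ 2) t.
Proof.
  intros Hr.
  assert (Hz : Cmod (polar r t) < 1) by (rewrite Cmod_polar; lra).
  eapply continuous_ext; [intros x; symmetry; apply integrand_eq; exact Hr|].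
  assert (C1 : continuous (fun t => r * Cmod (Tf al e (polar r t)) * / Cmod (pp e (polar r t))) t).
  { apply (continuous_mult (K := R_AbsRing)).
    - apply (continuous_mult (K := R_AbsRing)); [apply continuous_const|].
      apply (cont_CT (Tf al e) (polar r t)); [|reflexivity].
      apply Tf_cont; [exact al_pos|exact al_ex|exact Hz].
    - apply continuous_Rinv_comp.
      + apply (cont_CT (pp e) (polar r t)); [|reflexivity].
        apply (deriv_cont _ _ _ (pp_deriv e _ Hz)).
      + intros H. apply Cmod_eq_0 in H. revert H. apply pp_nz. lra. }
  apply (continuous_mult (K := R_AbsRing)); exact C1.
Qed.

Open Scope R_scope.

Lemma PI_gt_3 : 3 < PI.
Proof. pose proof PI2_3_2. lra. Qed.

Lemma I_lower (e : nat -> nat) m :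
  1 <= INR (e (S m)) ->
  (forall j, (j <= m)%nat -> (e j <= e m)%nat) ->
  6 * INR (S m) * INR (e m) <= al (S m) * INR (e (S m)) ->
  (al (S m) * INR (e (S m))) ^ 2 / 14 <= I_p (pp e) (Tf al e) (1 - / (4 * INR (e (S m)))).
Proof.
  intros HN Hmono Hhead.
  set (N := INR (e (S m))) in *.
  set (r := 1 - / (4 * N)).
  set (X := al (S m) * N).
  assert (Hq : 0 < / (4 * N) <= / 4).
  { split; [apply Rinv_0_lt_compat; lra|]. apply Rinv_le_contravar; lra. }
  assert (Hr : 3 / 4 <= r < 1) by (unfold r; lra).
  assert (HX : 0 <= X) by (unfold X; pose proof (al_pos (S m)); nra).
  pose proof PI_gt_3.
  unfold I_p.
  apply Rle_trans with (RInt (fun _ => X ^ 2 / 81) 0 (2 * PI)).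
  - rewrite RInt_const. change (scal (2 * PI - 0) (X ^ 2 / 81)) with ((2 * PI - 0) * (X ^ 2 / 81)).
    assert (0 <= X ^ 2) by nra. nra.
  - apply RInt_le.
    + lra.
    + apply ex_RInt_const.
    + apply (ex_RInt_continuous (V := R_CompleteNormedModule)). intros t _. apply (integrand_cont e r t). lra.
    + intros t _. rewrite integrand_eq by lra.
      set (z := polar r t).
      assert (Hz : Cmod z = r) by (apply Cmod_polar; lra).
      pose proof (T_lower e m z HN Hz Hmono Hhead) as HT. fold N X in HT.
      assert (Hz1 : Cmod z <= 1) by lra.
      pose proof (pp_bound e z Hz1) as Hp.
      assert (Hp0 : 0 < Cmod (pp e z)).
      { destruct (Cmod_ge_0 (pp e z)) as [H0|H0]; [exact H0|].
        symmetry in H0. apply Cmod_eq_0 in H0. exfalso. revert H0. apply pp_nz. exact Hz1. }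
      assert (Y : X / 9 <= r * Cmod (Tf al e z) * / Cmod (pp e z)).
      { apply (Rmult_le_reg_r (Cmod (pp e z))); [exact Hp0|].
        rewrite Rmult_assoc, Rinv_l, Rmult_1_r by lra.
        assert (r * (X / 5) <= r * Cmod (Tf al e z)) by (apply Rmult_le_compat_l; lra).
        assert (X / 9 * Cmod (pp e z) <= X / 9 * (19 / 15)) by (apply Rmult_le_compat_l; lra).
        nra. }
      assert (0 <= X / 9) by lra. nra.
Qed.

Open Scope R_scope.

Fixpoint nn (dl : nat -> R) (k : nat) : nat :=
  match k with
  | O => 1%nat
  | S m => S (Z.to_nat (up (6 * INR (S m) * INR (nn dl m) / al (S m) + / dl (S m))))
  end.

Lemma up_nat x : x < INR (Z.to_nat (up x)).
Proof.
  destruct (archimed x) as [H1 _].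
  rewrite INR_IZR_INZ, ZifyInst.of_nat_to_nat_eq.
  apply Rlt_le_trans with (IZR (up x)); [exact H1|]. apply IZR_le. lia.
Qed.

Lemma al_gt0 k : 0 < al k.
Proof. unfold al. apply Rmult_lt_0_compat; [lra|]. apply pow_lt. lra. Qed.

Lemma nn_ge1 dl k : 1 <= INR (nn dl k).
Proof.
  destruct k; simpl nn.
  - simpl. lra.
  - rewrite S_INR. match goal with |- _ <= INR ?x + 1 => pose proof (pos_INR x) end. lra.
Qed.

Lemma nn_S dl m : (forall k, 0 < dl k) ->
  6 * INR (S m) * INR (nn dl m) / al (S m) + / dl (S m) < INR (nn dl (S m)).
Proof.
  intros Hd. change (nn dl (S m)) with (S (Z.to_nat (up (6 * INR (S m) * INR (nn dl m) / al (S m) + / dl (S m))))).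
  rewrite (S_INR (Z.to_nat _)).
  pose proof (up_nat (6 * INR (S m) * INR (nn dl m) / al (S m) + / dl (S m))). lra.
Qed.

Lemma nn_props dl m : (forall k, 0 < dl k) ->
  6 * INR (S m) * INR (nn dl m) <= al (S m) * INR (nn dl (S m)) /\
  / dl (S m) < INR (nn dl (S m)) /\
  INR (S m) * INR (nn dl m) < INR (nn dl (S m)).
Proof.
  intros Hd. pose proof (nn_S dl m Hd) as H.
  pose proof (Hd (S m)) as Hd1. pose proof (Rinv_0_lt_compat _ Hd1).
  pose proof (al_gt0 (S m)) as Ha. pose proof (al_le (S m)).
  pose proof (nn_ge1 dl m). pose proof (pos_INR (S m)).
  set (Y := INR (S m) * INR (nn dl m)).
  assert (0 <= Y) by (unfold Y; nra).
  assert (E : 6 * INR (S m) * INR (nn dl m) / al (S m) = 6 * Y / al (S m)) by (unfold Y; field; lra).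
  rewrite E in H.
  assert (E2 : 6 * Y / al (S m) * al (S m) = 6 * Y) by (field; lra).
  assert (Hge : 4 * (6 * Y) <= 6 * Y / al (S m)).
  { apply (Rmult_le_reg_r (al (S m))); [lra|]. rewrite E2. nra. }
  split; [|split].
  - replace (6 * INR (S m) * INR (nn dl m)) with (6 * Y / al (S m) * al (S m)) by (rewrite E2; unfold Y; ring).
    rewrite (Rmult_comm (al (S m))). apply Rmult_le_compat_r; lra.
  - lra.
  - fold Y. lra.
Qed.

Lemma nn_mono dl : (forall k, 0 < dl k) -> forall m j, (j <= m)%nat -> (nn dl j <= nn dl m)%nat.
Proof.
  intros Hd m. induction m; intros j Hj.
  - assert (j = 0%nat) by lia. subst. lia.
  - destruct (Nat.eq_dec j (S m)) as [->|Hne]; [lia|].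
    assert (j <= m)%nat by lia.
    specialize (IHm j H).
    destruct (nn_props dl m Hd) as [_ [_ H3]].
    pose proof (nn_ge1 dl m). rewrite S_INR in H3. pose proof (pos_INR m).
    assert (INR (nn dl m) < INR (nn dl (S m))) by nra.
    apply INR_lt in H2. lia.
Qed.

Theorem theorem1p3 (Phi : R -> R)
  (Phi_pos : forall r, 0 < r < 1 -> 0 < Phi r)
  (Phi_little_o : forall eps, 0 < eps ->
      exists delta, 0 < delta /\
        forall r, 1 - delta < r < 1 -> Phi r <= eps / (1 - r) ^ 2) :
  exists p dp : C -> C,
    in_class_P_with_deriv p dp /\
    (* limsup_{r -> 1^-} I_p(r) / Phi(r) = +oo *)
    (forall M delta, 0 < delta ->
       exists r, 1 - delta < r < 1 /\ 0 < r /\ M < I_p p dp r / Phi r).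
Proof.
  set (eps := fun k : nat => al k ^ 2 / (224 * (INR k + 1))).
  assert (Heps : forall k, 0 < eps k).
  { intros k. unfold eps. pose proof (al_gt0 k). pose proof (pos_INR k).
    apply Rdiv_lt_0_compat; [apply pow_lt; lra|lra]. }
  assert (Hch : forall k, {d : R | 0 < d /\ forall r, 1 - d < r < 1 -> Phi r <= eps k / (1 - r) ^ 2}).
  { intros k. apply constructive_indefinite_description. apply Phi_little_o. apply Heps. }
  set (dl := fun k => proj1_sig (Hch k)).
  assert (Hdl : forall k, 0 < dl k) by (intros k; exact (proj1 (proj2_sig (Hch k)))).
  assert (Hdl2 : forall k r, 1 - dl k < r < 1 -> Phi r <= eps k / (1 - r) ^ 2)
    by (intros k; exact (proj2 (proj2_sig (Hch k)))).
  set (e := nn dl).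
  exists (pp e), (Tf al e). split; [apply class_P|].
  intros M delta Hdelta.
  set (m := Z.to_nat (up (Rmax M (/ delta)))).
  assert (Hm : Rmax M (/ delta) < INR m) by apply up_nat.
  assert (HmM : M < INR m) by (eapply Rle_lt_trans; [apply Rmax_l|exact Hm]).
  assert (Hmd : / delta < INR m) by (eapply Rle_lt_trans; [apply Rmax_r|exact Hm]).
  destruct (nn_props dl m Hdl) as [Hhead [Hdk Hgrow]].
  fold e in Hhead, Hdk, Hgrow.
  set (N := INR (e (S m))) in *.
  pose proof (nn_ge1 dl m) as He1. fold e in He1.
  pose proof (nn_ge1 dl (S m)) as HN1. fold e N in HN1.
  assert (HNm : INR (S m) < N) by (rewrite S_INR in *; pose proof (pos_INR m); nra).
  set (r := 1 - / (4 * N)).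
  assert (Hq : 0 < / (4 * N) <= / 4).
  { split; [apply Rinv_0_lt_compat; lra|]. apply Rinv_le_contravar; lra. }
  assert (HinvN : forall d, 0 < d -> / d < N -> / (4 * N) < d).
  { intros d Hd H. rewrite Rinv_mult.
    assert (/ N < d).
    { apply (Rmult_lt_reg_l N); [lra|]. rewrite Rinv_r by lra.
      apply (Rmult_lt_reg_l (/ d)); [apply Rinv_0_lt_compat; lra|].
      replace (/ d * (N * d)) with N by (field; lra). lra. }
    pose proof (Rinv_0_lt_compat N ltac:(lra)). lra. }
  exists r. split; [|split].
  - split; [|unfold r; lra].
    assert (/ (4 * N) < delta).
    { apply HinvN; [exact Hdelta|]. rewrite S_INR in HNm. lra. }
    unfold r. lra.
  - unfold r. lra.
  - assert (Hmono : forall j, (j <= m)%nat -> (e j <= e m)%nat) by (apply nn_mono; exact Hdl).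
    pose proof (I_lower e m HN1 Hmono Hhead) as HI. fold N r in HI.
    assert (Hr : 0 < r < 1) by (unfold r; lra).
    pose proof (Phi_pos r Hr) as HP.
    assert (Hphi : Phi r <= eps (S m) / (1 - r) ^ 2).
    { apply Hdl2. split; [|lra]. assert (/ (4 * N) < dl (S m)) by (apply HinvN; [apply Hdl|exact Hdk]).
      unfold r. lra. }
    set (X := al (S m) * N) in *.
    assert (Hval : eps (S m) / (1 - r) ^ 2 = X ^ 2 / 14 / (INR (S m) + 1)).
    { unfold eps, r, X. pose proof (pos_INR (S m)). field. split; lra. }
    rewrite Hval in Hphi.
    apply (Rmult_lt_reg_r (Phi r)); [exact HP|].
    unfold Rdiv at 1. rewrite Rmult_assoc, Rinv_l, Rmult_1_r by lra.
    assert (HS : 0 < INR (S m) + 1) by (pose proof (pos_INR (S m)); lra).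
    assert (Phi r * (INR (S m) + 1) <= X ^ 2 / 14).
    { apply (Rmult_le_compat_r (INR (S m) + 1)) in Hphi; [|lra].
      replace (X ^ 2 / 14 / (INR (S m) + 1) * (INR (S m) + 1)) with (X ^ 2 / 14) in Hphi by (field; lra).
      exact Hphi. }
    assert (M < INR (S m) + 1) by (rewrite S_INR; lra).
    assert (M * Phi r < (INR (S m) + 1) * Phi r) by (apply Rmult_lt_compat_r; lra).
    lra.
Qed.
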